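(* Let $\rho$ be a type-I elliptic isometry of $\mathbb{H}^4$ with twisting plane $P$. Then a plane $Q$ of $\mathbb{H}^4$ is orthogonal to $P$ through a line (i.e. $Q\cap P$ is a line and $Q$ meets $P$ orthogonally along it) if and only if $\partial Q\in\mathcal{K}_\rho$.
   Context: A type-I elliptic isometry of $\mathbb{H}^4$ is a composition of reflections in two distinct hyperplanes meeting in a plane; its fixed-point set, a plane, is its twisting plane $P$. The permuted pencil $\mathcal{F}_\rho$ is the set of boundaries at infinity of hyperplanes containing $P$. The invariant pencil $\mathcal{T}_\rho$ is the set of boundaries of hyperplanes orthogonal to $P$. The half-turn bank is $\mathcal{K}_\rho=\{s\cap t: s\in\mathcal{F}_\rho,\ t\in\mathcal{T}_\rho\}$, a set of subsets of $\partial\mathbb{H}^4$. *)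

(* Defs.v *)
(* hyperboloid model of H^4 inside Minkowski space R^{4,1}. *)
From HB Require Import structures.
From mathcomp Require Import all_boot all_order all_algebra.
From mathcomp Require Import boolp classical_sets reals.
Set Implicit Arguments. Unset Strict Implicit. Unset Printing Implicit Defensive.
Import Order.TTheory GRing.Theory Num.Theory.
Local Open Scope ring_scope.
Local Open Scope classical_set_scope.

Section H4.
Variable R : realType.

(* vectors of R^{4,1}, coordinates 0..4, coordinate 0 is the time coordinate *)
Definition vec := 'rV[R]_5.

Definition mink (u v : vec) : R :=
  \sum_(i < 5) (if i == ord0 then -1 else 1) * u 0 i * v 0 i.

Definition inH4 (x : vec) : Prop := mink x x = -1 /\ 0 < x 0 ord0.

(* points of the boundary at infinity dH^4: null rays, represented by their
   unique representative with time coordinate 1 *)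
Definition ideal (p : vec) : Prop := mink p p = 0 /\ p 0 ord0 = 1.

Definition in_span (S : set vec) (u : vec) : Prop :=
  forall V : 'M[R]_5, (forall x, S x -> (x <= V)%MS) -> (u <= V)%MS.

(* totally geodesic k-dimensional subspaces of H^4:
   nonempty intersections of H^4 with (k+1)-dimensional linear subspaces *)
Definition totgeod (k : nat) (S : set vec) : Prop :=
  exists V : 'M[R]_5, \rank V = k.+1 /\
    S = [set x | inH4 x /\ (x <= V)%MS] /\ exists x, S x.

Definition is_line := totgeod 1.
Definition is_plane := totgeod 2.
Definition is_hyperplane := totgeod 3.

Definition tang (S : set vec) (x u : vec) : Prop := in_span S u /\ mink x u = 0.

Definition bd (S : set vec) : set vec := [set p | ideal p /\ in_span S p].

Definition hyp_of (n : vec) : set vec := [set x | inH4 x /\ mink x n = 0].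
Definition refl (n : vec) (x : vec) : vec := x - ((2 * mink x n) / mink n n) *: n.

Definition type_I_elliptic (rho : vec -> vec) : Prop :=
  exists n1 n2 : vec, 0 < mink n1 n1 /\ 0 < mink n2 n2 /\
    hyp_of n1 <> hyp_of n2 /\ is_plane (hyp_of n1 `&` hyp_of n2) /\
    forall x, inH4 x -> rho x = refl n1 (refl n2 x).

Definition twisting_plane (rho : vec -> vec) : set vec :=
  [set x | inH4 x /\ rho x = x].

Definition hyp_orth (T P : set vec) : Prop :=
  exists n : vec, 0 < mink n n /\ T = hyp_of n /\
    (exists x, T x /\ P x) /\ forall x, T x -> P x -> tang P x n.

Definition permuted_pencil (rho : vec -> vec) : set (set vec) :=
  [set s | exists S, is_hyperplane S /\ twisting_plane rho `<=` S /\ s = bd S].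
Definition invariant_pencil (rho : vec -> vec) : set (set vec) :=
  [set t | exists T, is_hyperplane T /\ hyp_orth T (twisting_plane rho) /\ t = bd T].
Definition half_turn_bank (rho : vec -> vec) : set (set vec) :=
  [set k | exists s t, permuted_pencil rho s /\ invariant_pencil rho t /\ k = s `&` t].

Definition orth_through_line (Q P : set vec) : Prop :=
  is_line (Q `&` P) /\
  forall x u v, (Q `&` P) x -> tang Q x u -> tang P x v ->
    (forall w, tang (Q `&` P) x w -> mink u w = 0) ->
    (forall w, tang (Q `&` P) x w -> mink v w = 0) ->
    mink u v = 0.

End H4.

(* Main.v *)
Require Import Defs.
From mathcomp Require Import all_boot all_order all_algebra.
From mathcomp Require Import boolp classical_sets reals.
From mathcomp Require Import ring lra.
Set Implicit Arguments. Unset Strict Implicit. Unset Printing Implicit Defensive.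
Import Order.TTheory GRing.Theory Num.Theory.
Local Open Scope ring_scope.
Local Open Scope classical_set_scope.
Section S.
Variable R : realType.
Implicit Types u v w x y z n p : vec R.
Definition i1 : 'I_5 := lift ord0 (ord0 : 'I_4).
Definition i2 : 'I_5 := lift ord0 (lift ord0 (ord0 : 'I_3) : 'I_4).
Definition i3 : 'I_5 := lift ord0 (lift ord0 (lift ord0 (ord0 : 'I_2) : 'I_3) : 'I_4).
Definition i4 : 'I_5 := lift ord0 (lift ord0 (lift ord0 (lift ord0 (ord0 : 'I_1) : 'I_2) : 'I_3) : 'I_4).

Lemma minkE u v : mink u v = - (u 0 ord0 * v 0 ord0) + (u 0 i1 * v 0 i1 + u 0 i2 * v 0 i2 + u 0 i3 * v 0 i3 + u 0 i4 * v 0 i4).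
Proof. rewrite /mink !big_ord_recl big_ord0 /= /i4 /i3 /i2 /i1. ring. Qed.

Lemma minkC u v : mink u v = mink v u.
Proof. by apply: eq_bigr => i _; rewrite mulrAC. Qed.
Lemma minkDl u v w : mink (u + v) w = mink u w + mink v w.
Proof. rewrite /mink -big_split; apply: eq_bigr => i _; rewrite mxE /=; ring. Qed.
Lemma minkZl a u w : mink (a *: u) w = a * mink u w.
Proof. rewrite /mink mulr_sumr; apply: eq_bigr => i _; rewrite mxE; ring. Qed.
Lemma minkNl u w : mink (- u) w = - mink u w.
Proof. by rewrite -scaleN1r minkZl mulN1r. Qed.
Lemma minkBl u v w : mink (u - v) w = mink u w - mink v w.
Proof. by rewrite minkDl minkNl. Qed.
Lemma minkDr u v w : mink w (u + v) = mink w u + mink w v.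
Proof. by rewrite minkC minkDl !(minkC w). Qed.
Lemma minkZr a u w : mink w (a *: u) = a * mink w u.
Proof. by rewrite minkC minkZl minkC. Qed.
Lemma minkNr u w : mink w (- u) = - mink w u.
Proof. by rewrite minkC minkNl minkC. Qed.
Lemma minkBr u v w : mink w (u - v) = mink w u - mink w v.
Proof. by rewrite minkDr minkNr. Qed.
Lemma mink0l u : mink 0 u = 0.
Proof. by rewrite -(scale0r 0) minkZl mul0r. Qed.
Lemma mink0r u : mink u 0 = 0.
Proof. by rewrite minkC mink0l. Qed.
Definition minkL := (minkDl, minkBl, minkZl, minkNl, minkDr, minkBr, minkZr, minkNr, mink0l, mink0r).

Lemma vec0P w : w 0 ord0 = 0 -> w 0 i1 = 0 -> w 0 i2 = 0 -> w 0 i3 = 0 -> w 0 i4 = 0 -> w = 0.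
Proof.
move=> h0 h1 h2 h3 h4; apply/rowP => i; rewrite mxE.
case: i => [[|[|[|[|[|//]]]]] Hi].
- by rewrite -h0; congr (w 0 _); apply: val_inj.
- by rewrite -h1; congr (w 0 _); apply: val_inj.
- by rewrite -h2; congr (w 0 _); apply: val_inj.
- by rewrite -h3; congr (w 0 _); apply: val_inj.
- by rewrite -h4; congr (w 0 _); apply: val_inj.
Qed.

Lemma CS4 (a1 a2 a3 a4 b1 b2 b3 b4 : R) :
  (a1*b1 + a2*b2 + a3*b3 + a4*b4)^+2 <= (a1^+2+a2^+2+a3^+2+a4^+2)*(b1^+2+b2^+2+b3^+2+b4^+2).
Proof.
rewrite -subr_ge0.
have -> : (a1^+2+a2^+2+a3^+2+a4^+2)*(b1^+2+b2^+2+b3^+2+b4^+2) - (a1*b1 + a2*b2 + a3*b3 + a4*b4)^+2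
  = (a1*b2-a2*b1)^+2 + (a1*b3-a3*b1)^+2 + (a1*b4-a4*b1)^+2 + (a2*b3-a3*b2)^+2 + (a2*b4-a4*b2)^+2 + (a3*b4-a4*b3)^+2 by ring.
by rewrite !addr_ge0 // sqr_ge0.
Qed.

Lemma H4_self x : inH4 x -> mink x x = -1.
Proof. by case. Qed.

Lemma orth_ineq x w : inH4 x -> mink x w = 0 ->
  0 <= mink w w /\ (w 0 ord0)^+2 + mink w w <= (x 0 ord0)^+2 * mink w w.
Proof.
case=> hx ht; move: hx; rewrite !minkE => hx hxw.
set t := x 0 ord0 in hx hxw ht *.
have cs := CS4 (x 0 i1) (x 0 i2) (x 0 i3) (x 0 i4) (w 0 i1) (w 0 i2) (w 0 i3) (w 0 i4).
set W := (w 0 i1 ^+ 2 + w 0 i2 ^+ 2 + w 0 i3 ^+ 2 + w 0 i4 ^+ 2) in cs.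
have eW : w 0 i1 * w 0 i1 + w 0 i2 * w 0 i2 + w 0 i3 * w 0 i3 + w 0 i4 * w 0 i4 = W by rewrite /W; ring.
rewrite eW.
have eX : x 0 i1 ^+ 2 + x 0 i2 ^+ 2 + x 0 i3 ^+ 2 + x 0 i4 ^+ 2 = t^+2 - 1 by rewrite -[t^+2]mulr1 expr2; lra.
have eXW : x 0 i1 * w 0 i1 + x 0 i2 * w 0 i2 + x 0 i3 * w 0 i3 + x 0 i4 * w 0 i4 = t * w 0 ord0 by lra.
rewrite eX eXW in cs.
set w0 := w 0 ord0 in cs *.
have W0 : 0 <= W by rewrite /W !addr_ge0 // sqr_ge0.
have t2 : 0 < t ^+ 2 by rewrite exprn_gt0.
have key : t^+2 * (W - w0^+2) >= W by nra.
split; first by nra.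
nra.
Qed.

Lemma sq0 (a : R) : a^+2 <= 0 -> a = 0.
Proof. move=> h; have : a^+2 = 0 by apply/eqP; rewrite eq_le h sqr_ge0. by move/eqP; rewrite sqrf_eq0 => /eqP. Qed.

Lemma spacelike x w : inH4 x -> mink x w = 0 -> w != 0 -> 0 < mink w w.
Proof.
move=> hx hxw nz; have [h1 h2] := orth_ineq hx hxw.
rewrite lt_neqAle h1 andbT; apply/negP => /eqP h0.
move: h2; rewrite -h0 mulr0 addr0 => /sq0 w0.
move: h0; rewrite minkE w0 mul0r oppr0 add0r => h0.
have s1 := sqr_ge0 (w 0 i1); have s2 := sqr_ge0 (w 0 i2); have s3 := sqr_ge0 (w 0 i3); have s4 := sqr_ge0 (w 0 i4).
rewrite !expr2 in s1 s2 s3 s4.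
move/negP: nz; apply; apply/eqP; apply: vec0P => //; apply: sq0; rewrite expr2; lra.
Qed.

Lemma pos_pm (c d : R) : 0 < c -> d^+2 < c^+2 -> 0 < c + d /\ 0 < c - d.
Proof. move=> hc h; split; nra. Qed.

Lemma lin_sub m (W : 'M[R]_(m,5)) a b y1 y2 : (y1 <= W)%MS -> (y2 <= W)%MS -> ((a *: y1 + b *: y2)%R <= W)%MS.
Proof. by move=> h1 h2; apply: addmx_sub; apply: scalemx_sub. Qed.

Lemma minksq a x w : mink (a *: x + w) (a *: x + w) = a^+2 * mink x x + 2 * a * mink x w + mink w w.
Proof. rewrite !minkL (minkC w x); ring. Qed.

Lemma spanH4 m (V : 'M[R]_(m,5)) x0 u : inH4 x0 -> (x0 <= V)%MS -> (u <= V)%MS ->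
  in_span [set y | inH4 y /\ (y <= V)%MS] u.
Proof.
move=> hx0 x0V uV W hW.
have x0W : (x0 <= W)%MS by apply: hW.
set c := mink u x0; set w := u + c *: x0.
have hw : mink x0 w = 0 by rewrite /w !minkL (minkC x0 u) H4_self // /c; ring.
have [Bw ineq] := orth_ineq hx0 hw.
set a := Num.sqrt (1 + mink w w).
have a2 : a ^+ 2 = 1 + mink w w by rewrite sqr_sqrtr //; lra.
have a0 : 0 < a by rewrite sqrtr_gt0; lra.
set y1 := a *: x0 + w.
have y1V : (y1 <= V)%MS by rewrite /y1 -[w]scale1r; apply: lin_sub => //; rewrite /w -[u]scale1r; apply: lin_sub.
have ht : 0 < x0 0 ord0 by case: hx0.
have y1H : inH4 y1.
  split.
    rewrite /y1 minksq hw H4_self // a2; ring.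
  rewrite /y1 !mxE.
  have hc : 0 < a * x0 0 ord0 by rewrite mulr_gt0.
  have hd : w 0 ord0 ^+ 2 < (a * x0 0 ord0) ^+ 2.
    rewrite exprMn a2. have := exprn_gt0 2 ht. nra.
  by have [hh _] := pos_pm hc hd; move: hh; rewrite /w !mxE.
have y1W : (y1 <= W)%MS by apply: hW; split.
have -> : u = 1 *: y1 + (- a - c) *: x0.
  by apply/rowP => i; rewrite /y1 /w !mxE; ring.
exact: lin_sub.
Qed.

Lemma span_sub (V : 'M[R]_5) u : in_span [set y | inH4 y /\ (y <= V)%MS] u -> (u <= V)%MS.
Proof. by move=> h; apply: h => y []. Qed.

Lemma nullspan m (V : 'M[R]_(m,5)) x w (W : 'M[R]_5) :
  inH4 x -> (x <= V)%MS -> (w <= V)%MS -> mink x w = 0 -> w != 0 ->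
  (forall p, ideal p -> (p <= V)%MS -> (p <= W)%MS) ->
  forall z, (z <= V)%MS -> (z <= W)%MS.
Proof.
move=> hx xV wV hxw nzw hW.
have ht : 0 < x 0 ord0 by case: hx.
have key : forall w', (w' <= V)%MS -> mink x w' = 0 -> w' != 0 -> (x <= W)%MS /\ (w' <= W)%MS.
  move=> w' w'V hxw' nz'.
  have B0 := spacelike hx hxw' nz'.
  have [_ ineq] := orth_ineq hx hxw'.
  set k := Num.sqrt (mink w' w').
  have k0 : 0 < k by rewrite sqrtr_gt0.
  have k2 : k ^+ 2 = mink w' w' by rewrite sqr_sqrtr // ltW.
  have qW : forall s : R, s ^+ 2 = 1 -> ((x + (s / k) *: w')%R <= W)%MS.
    move=> s s2.
    set q := x + (s / k) *: w'.
    have hq : mink q q = 0.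
      rewrite /q -[x]scale1r minksq !minkZl !minkZr hxw' H4_self // -k2.
      rewrite expr2 in s2; have -> : s / k * (s / k * k ^+ 2) = s * s by field; rewrite gt_eqF.
      rewrite s2; ring.
    have q0 : 0 < q 0 ord0.
      rewrite /q !mxE.
      set d := s / k * w' 0 ord0.
      have hd : d ^+ 2 * mink w' w' = w' 0 ord0 ^+ 2.
        rewrite expr2 in s2; rewrite /d -k2; have -> : (s / k * w' 0 ord0) ^+ 2 * k ^+ 2 = (s * s) * w' 0 ord0 ^+ 2 by field; rewrite gt_eqF.
        by rewrite s2 mul1r.
      have hd' : d ^+ 2 < x 0 ord0 ^+ 2 by nra.
      by have [hh _] := pos_pm ht hd'.
    have qV : (q <= V)%MS by rewrite /q -[x]scale1r; apply: lin_sub.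
    have pW : ((q 0 ord0)^-1 *: q <= W)%MS.
      apply: hW; last by rewrite -[_ *: q]addr0 -[X in (_ + X)%R](scale0r x); apply: lin_sub.
      split; first by rewrite minkZl minkZr hq !mulr0.
      by rewrite mxE mulVf // gt_eqF.
    have -> : q = (q 0 ord0) *: ((q 0 ord0)^-1 *: q).
      by rewrite scalerA mulfV ?scale1r // gt_eqF.
    exact: scalemx_sub.
  have e1 : (-1 : R)^+2 = 1 by rewrite sqrrN expr1n.
  have h1 := qW 1 (expr1n _ _); have h2 := qW (-1) e1.
  split.
    have -> : x = 2^-1 *: (x + (1 / k) *: w') + 2^-1 *: (x + (-1 / k) *: w').
      apply/rowP => i; rewrite !mxE; field; lra.
    exact: lin_sub.
  have -> : w' = (k/2) *: (x + (1 / k) *: w') + (- (k/2)) *: (x + (-1 / k) *: w').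
    apply/rowP => i; rewrite !mxE; field; lra.
  exact: lin_sub.
have [xW _] := key w wV hxw nzw.
move=> z zV.
set w'' := z + mink z x *: x.
have hw'' : mink x w'' = 0 by rewrite /w'' minkDr minkZr H4_self // minkC; ring.
have w''V : (w'' <= V)%MS by rewrite /w'' -[z]scale1r; apply: lin_sub.
have -> : z = 1 *: w'' + (- mink z x) *: x by apply/rowP => i; rewrite /w'' !mxE; ring.
apply: lin_sub => //.
have [->|nz] := eqVneq w'' 0; first exact: sub0mx.
by have [] := key _ w''V hw'' nz.
Qed.

Lemma subAddP m (A : 'M[R]_(m,5)) u z : (z <= A + u)%MS -> exists z' c, (z' <= A)%MS /\ z = z' + c *: u.
Proof.
case/sub_addsmxP => [[d1 d2] /= ->].
have : (d2 *m u <= u)%MS by apply: submxMl.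
case/sub_rVP => c ->; exists (d1 *m A), c; split => //; exact: submxMl.
Qed.

Lemma subAdd m (A : 'M[R]_(m,5)) u z c : (z <= A)%MS -> ((z + c *: u)%R <= A + u)%MS.
Proof.
move=> h; apply: addmx_sub; first exact: submx_trans h (addsmxSl _ _).
by apply: scalemx_sub; apply: addsmxSr.
Qed.

Lemma subAddl m (A : 'M[R]_(m,5)) u z : (z <= A)%MS -> (z <= A + u)%MS.
Proof. by move=> h; apply: submx_trans h (addsmxSl _ _). Qed.
Lemma subAddr m (A : 'M[R]_(m,5)) u : (u <= A + u)%MS.
Proof. exact: addsmxSr. Qed.

Definition orthsp m (A : 'M[R]_(m,5)) v := forall z, (z <= A)%MS -> mink z v = 0.

Lemma orthsp1 x v : mink x v = 0 -> orthsp x v.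
Proof. by move=> h z /sub_rVP [c ->]; rewrite minkZl h mulr0. Qed.

Lemma orthspD m (A : 'M[R]_(m,5)) u v : orthsp A v -> mink u v = 0 -> orthsp (A + u)%MS v.
Proof. by move=> hA hu z /subAddP [z' [c [hz ->]]]; rewrite minkDl minkZl hA // hu; ring. Qed.

Lemma notin m (A : 'M[R]_(m,5)) x z : inH4 x -> (x <= A)%MS -> orthsp A z -> z != 0 -> ~~ (z <= A)%MS.
Proof.
move=> hx xA oz nz; apply/negP => zA.
have := spacelike hx (oz _ xA) nz; by rewrite oz // ltxx.
Qed.

Lemma rank_add m (A : 'M[R]_(m,5)) u : ~~ (u <= A)%MS -> \rank (A + u)%MS = (\rank A).+1.
Proof.
move=> nu.
have nz : u != 0 by apply: contraNneq nu => ->; apply: sub0mx.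
have h := mxrank_sum_cap A u.
have ru : \rank u = 1%N by rewrite rank_rV nz.
have c0 : \rank (A :&: u)%MS = 0%N.
  have : (\rank (A :&: u)%MS <= 1)%N by rewrite (leq_trans (mxrankS (capmxSr A u))) // ru.
  rewrite leq_eqVlt ltnS leqn0 => /orP [/eqP r1|/eqP //].
  exfalso; move/negP: nu; apply.
  have : (u <= A :&: u)%MS.
    by have [_ <-] := mxrank_leqif_sup (capmxSr A u); rewrite r1 ru.
  by move/submx_trans; apply; apply: capmxSl.
rewrite c0 ru addn0 in h; rewrite h addn1 //.
Qed.

Lemma eq_by_rank m1 m2 (A : 'M[R]_(m1,5)) (V : 'M[R]_(m2,5)) : (A <= V)%MS -> (\rank V <= \rank A)%N -> (V <= A)%MS.
Proof.
move=> sAV r; have [_ <-] := mxrank_leqif_sup sAV.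
by rewrite eqn_leq r mxrankS.
Qed.

Lemma gs m1 m2 (A : 'M[R]_(m1,5)) (V : 'M[R]_(m2,5)) (P : vec R -> Prop) :
  (A <= V)%MS -> (\rank A < \rank V)%N ->
  (forall z, exists p, (p <= A)%MS /\ P (z - p)) ->
  exists u, (u <= V)%MS /\ u != 0 /\ P u.
Proof.
move=> sAV r hP.
have : ~~ (V <= A)%MS by apply: contraTN r => h; rewrite -leqNgt mxrankS.
case/row_subPn => i ni.
have [p [pA Pp]] := hP (row i V).
exists (row i V - p); split; last split => //.
- rewrite -[row i V]scale1r -scaleN1r; apply: lin_sub; first exact: row_sub.
  exact: submx_trans pA sAV.
- apply: contraNneq ni => /eqP; rewrite subr_eq0 => /eqP ->; done.
Qed.

Definition mJ (n : vec R) : 'M[R]_(5,1) := \matrix_(i < 5, j < 1) ((if i == ord0 then -1 else 1) * n 0 i).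

Lemma kerJ z n : (z <= kermx (mJ n))%MS = (mink z n == 0).
Proof.
rewrite sub_kermx.
have -> : (z *m mJ n == 0) = ((z *m mJ n) 0 0 == 0).
  apply/eqP/eqP => [->|h]; first by rewrite mxE.
  by apply/matrixP => i j; rewrite !ord1 h mxE.
rewrite mxE /mink; congr (_ == 0); apply: eq_bigr => i _; rewrite mxE; ring.
Qed.

Lemma rank_kerJ n : n != 0 -> \rank (kermx (mJ n)) = 4%N.
Proof.
move=> nz; rewrite mxrank_ker.
have r1 : \rank (mJ n) = 1%N.
  apply/eqP; rewrite eqn_leq rank_leq_col lt0n mxrank_eq0.
  apply: contraNneq nz => h; apply/eqP/rowP => i; have := congr1 (fun M : 'M[R]_(5,1) => M i 0) h.
  rewrite !mxE; case: (i == ord0) => hh; lra.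
by rewrite r1.
Qed.

Lemma hyp_ker n : hyp_of n = [set x | inH4 x /\ (x <= kermx (mJ n))%MS].
Proof. by apply/seteqP; split => x [h1 h2]; split => //; move: h2; rewrite kerJ => /eqP. Qed.

Lemma nz_of_pos n : 0 < mink n n -> n != 0.
Proof. by apply: contraTneq => ->; rewrite mink0l ltxx. Qed.

Lemma twistE (rho : vec R -> vec R) n1 n2 : 0 < mink n1 n1 -> 0 < mink n2 n2 ->
  hyp_of n1 <> hyp_of n2 -> (forall x, inH4 x -> rho x = refl n1 (refl n2 x)) ->
  twisting_plane rho = hyp_of n1 `&` hyp_of n2.
Proof.
move=> p1 p2 ne hr; apply/seteqP; split => x.
  case=> hx; rewrite hr // /refl.
  set a := 2 * mink x n2 / mink n2 n2.
  set y := x - a *: n2.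
  set b := 2 * mink y n1 / mink n1 n1 => h.
  have hi : forall i, a * n2 0 i + b * n1 0 i = 0.
    by move=> i; have := congr1 (fun M : vec R => M 0 i) h; rewrite /y !mxE; lra.
  have [a0|a0] := eqVneq a 0.
    have e2 : mink x n2 = 0.
      move: a0; rewrite /a => /eqP; rewrite mulf_eq0 invr_eq0 (gt_eqF p2) orbF mulf_eq0 => /orP [|/eqP //].
      by rewrite pnatr_eq0.
    have b0 : b = 0.
      apply/eqP; apply: contraTT p1 => nb.
      have -> : n1 = 0 by apply/rowP => i; have := hi i; rewrite a0 mul0r add0r mxE => /eqP; rewrite mulf_eq0 (negbTE nb) /= => /eqP.
      by rewrite mink0l ltxx.
    have e1 : mink y n1 = 0.
      move: b0; rewrite /b => /eqP; rewrite mulf_eq0 invr_eq0 (gt_eqF p1) orbF mulf_eq0 => /orP [|/eqP //].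
      by rewrite pnatr_eq0.
    move: e1; rewrite /y a0 scale0r subr0 => e1.
    by split; split.
  exfalso; apply: ne.
  set c := - b / a.
  have n2c : n2 = c *: n1.
    apply/rowP => i; rewrite mxE /c; have hh := hi i.
    have -> : n2 0 i = (a * n2 0 i) / a by field.
    rewrite (_ : a * n2 0 i = - (b * n1 0 i)); first by field.
    lra.
  have c0 : c != 0 by apply: contraTneq p2 => c0; rewrite n2c c0 scale0r mink0l ltxx.
  apply/seteqP; split => z [hz hz']; split => //; move: hz'; rewrite n2c minkZr.
    by move=> ->; rewrite mulr0.
  by move/eqP; rewrite mulf_eq0 (negbTE c0) => /eqP.
case=> [[hx e1] [_ e2]]; split => //.
by rewrite hr // /refl e2 mulr0 mul0r scale0r subr0 e1 mulr0 mul0r scale0r subr0.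
Qed.

Lemma in_span_mono (A B : set (vec R)) u : A `<=` B -> in_span A u -> in_span B u.
Proof. by move=> AB h W hW; apply: h => x Ax; apply: hW; apply: AB. Qed.

Lemma prj1 x z : inH4 x -> mink x (z - (- mink z x) *: x) = 0.
Proof. move=> hx; rewrite !minkL H4_self // (minkC x z); ring. Qed.

Lemma prj2 x e z : inH4 x -> mink x e = 0 -> e != 0 ->
  let p := (- mink z x) *: x + (mink z e / mink e e) *: e in
  mink x (z - p) = 0 /\ mink e (z - p) = 0.
Proof.
move=> hx xe nz p.
have ee := spacelike hx xe nz.
have ex : mink e x = 0 by rewrite minkC.
rewrite /p !minkL H4_self // xe ex (minkC x z) (minkC e z); split; field; by rewrite gt_eqF.
Qed.

Lemma prj3 x e n z : inH4 x -> mink x e = 0 -> e != 0 -> mink x n = 0 -> n != 0 -> mink e n = 0 ->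
  let p := (- mink z x) *: x + (mink z e / mink e e) *: e + (mink z n / mink n n) *: n in
  mink x (z - p) = 0 /\ mink e (z - p) = 0 /\ mink n (z - p) = 0.
Proof.
move=> hx xe nze xn nzn en p.
have ee := spacelike hx xe nze.
have nn := spacelike hx xn nzn.
have ex : mink e x = 0 by rewrite minkC.
have nx : mink n x = 0 by rewrite minkC.
have ne : mink n e = 0 by rewrite minkC.
rewrite /p !minkL H4_self // xe ex xn nx en ne (minkC x z) (minkC e z) (minkC n z).
split; [|split]; field; rewrite ?gt_eqF //.
Qed.

Lemma H4_nz x : inH4 x -> x != 0.
Proof. move=> hx; apply/eqP => h; have := H4_self hx; rewrite h mink0l => /eqP; by rewrite eq_sym oppr_eq0 oner_eq0. Qed.

Lemma rank1 x : inH4 x -> \rank x = 1%N.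
Proof. by move=> hx; rewrite rank_rV (H4_nz hx). Qed.

Lemma fwd (VP : 'M[R]_5) (Q : set (vec R)) :
  let P := [set x | inH4 x /\ (x <= VP)%MS] in
  \rank VP = 3%N -> is_plane Q -> orth_through_line Q P ->
  exists S T, is_hyperplane S /\ P `<=` S /\ is_hyperplane T /\ hyp_orth T P /\
    bd Q = bd S `&` bd T.
Proof.
move=> P rP [VQ [rQ [eQ _]]] [[VL [rL [eL [x hxL]]]] horth].
have hxQP : (Q `&` P) x by [].
have hxQ : Q x by case: hxQP.
have hxP : P x by case: hxQP.
rewrite eL in hxL; case: hxL => hx xL.
have xQ : (x <= VQ)%MS by move: hxQ; rewrite eQ => -[].
have xP : (x <= VP)%MS by case: hxP.
have [e [eL' [nze xe]]] : exists e, (e <= VL)%MS /\ e != 0 /\ mink x e = 0.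
  apply: (gs (A := x)) => //; first by rewrite (rank1 hx) rL.
  by move=> z; exists ((- mink z x) *: x); split; [apply: scalemx_sub | apply: prj1].
have ex : mink e x = 0 by rewrite minkC.
have eQP : forall z, (z <= VL)%MS -> (z <= VQ)%MS /\ (z <= VP)%MS.
  move=> z zL.
  have hs : in_span (Q `&` P) z by rewrite eL; apply: spanH4 xL zL.
  split.
    by apply: span_sub; rewrite -eQ; apply: in_span_mono hs => ? [].
  by apply: span_sub; apply: in_span_mono hs => ? [].
have [eQ' eP'] := eQP e eL'.
have ree : \rank (x + e)%MS = 2%N.
  by rewrite rank_add ?(rank1 hx) // (notin hx (submx_refl _) (orthsp1 xe)).
have xe_sub : forall V : 'M[R]_5, (x <= V)%MS -> (e <= V)%MS -> ((x + e)%MS <= V)%MS.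
  by move=> V h1 h2; rewrite addsmx_sub h1 h2.
have pr2 : forall z, exists p, (p <= x + e)%MS /\ (mink x (z - p) = 0 /\ mink e (z - p) = 0).
  move=> z; exists ((- mink z x) *: x + (mink z e / mink e e) *: e); split.
    by apply: lin_sub; [apply: subAddl; apply: submx_refl | apply: subAddr].
  exact: prj2.
have [u [uQ [nzu [xu eu]]]] : exists u, (u <= VQ)%MS /\ u != 0 /\ (mink x u = 0 /\ mink e u = 0).
  by apply: (gs (A := (x + e)%MS)) => //; [apply: xe_sub | rewrite ree rQ].
have [v [vP [nzv [xv ev]]]] : exists v, (v <= VP)%MS /\ v != 0 /\ (mink x v = 0 /\ mink e v = 0).
  by apply: (gs (A := (x + e)%MS)) => //; [apply: xe_sub | rewrite ree rP].
have VLe : (VL <= x + e)%MS by apply: eq_by_rank; [apply: xe_sub | rewrite rL ree].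
have uv : mink u v = 0.
  apply: (horth x) => //.
  - by split => //; rewrite eQ; apply: spanH4 xQ uQ.
  - by split => //; apply: spanH4 xP vP.
  - move=> w [hw _]; rewrite minkC.
    have wL : (w <= VL)%MS by apply: span_sub; rewrite -eL.
    exact: (orthspD (orthsp1 xu) eu) (submx_trans wL VLe).
  - move=> w [hw _]; rewrite minkC.
    have wL : (w <= VL)%MS by apply: span_sub; rewrite -eL.
    exact: (orthspD (orthsp1 xv) ev) (submx_trans wL VLe).
have vv := spacelike hx xv nzv.
have oxeu_v : orthsp (x + e + u)%MS v.
  by apply: orthspD; [apply: orthspD; [apply: orthsp1|]|].
have oxe_u : orthsp (x + e)%MS u by apply: orthspD; [apply: orthsp1|].
have oxe_v : orthsp (x + e)%MS v by apply: orthspD; [apply: orthsp1|].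
have r3u : \rank (x + e + u)%MS = 3%N by rewrite rank_add ?ree // (notin hx (subAddl _ (submx_refl _)) oxe_u).
have r3v : \rank (x + e + v)%MS = 3%N by rewrite rank_add ?ree // (notin hx (subAddl _ (submx_refl _)) oxe_v).
have r4 : \rank (x + e + u + v)%MS = 4%N by rewrite rank_add ?r3u // (notin hx (subAddl _ (subAddl _ (submx_refl _))) oxeu_v).
have xeuQ : ((x + e + u)%MS <= VQ)%MS by rewrite !addsmx_sub xQ eQ' uQ.
have QE : (VQ <= x + e + u)%MS by apply: eq_by_rank; rewrite // r3u rQ.
have PE : (VP <= x + e + v)%MS by apply: eq_by_rank; [rewrite !addsmx_sub xP eP' vP | rewrite r3v rP].
have x4 : (x <= x + e + u + v)%MS by do 3 apply: subAddl; apply: submx_refl.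
have xker : (x <= kermx (mJ v))%MS by rewrite kerJ xv.
exists [set y | inH4 y /\ (y <= x + e + u + v)%MS], (hyp_of v).
split; first by exists (x + e + u + v)%MS; split => //; split => //; exists x.
split.
  move=> y [hy yP]; split => //.
  have := submx_trans yP PE; case/subAddP => y' [c [hy' ->]].
  by apply: subAdd; apply: subAddl.
split.
  rewrite hyp_ker; exists (kermx (mJ v)); split; first by rewrite rank_kerJ.
  by split => //; exists x.
split.
  exists v; split => //; split => //; split; first by exists x; split => //; split.
  by move=> y [hy yv] _; split => //; apply: spanH4 xP vP.
apply/seteqP; split => p.
  case=> hp; rewrite eQ => /span_sub pQ.
  have p3 := submx_trans pQ QE.
  split; split => //.
    by apply: spanH4 x4 _ => //; apply: subAddl.
  rewrite hyp_ker; apply: spanH4 xker _ => //.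
  by rewrite kerJ oxeu_v.
case=> [[hp sS] [_ sT]].
have p4 := span_sub sS.
move: sT; rewrite hyp_ker => /span_sub; rewrite kerJ => /eqP pv.
split => //; rewrite eQ; apply: spanH4 xQ _ => //.
move: p4; case/subAddP => p' [c [hp' ep]].
have c0 : c = 0.
  move: pv; rewrite ep minkDl minkZl oxeu_v // add0r => /eqP; rewrite mulf_eq0 (gt_eqF vv) orbF => /eqP //.
by rewrite ep c0 scale0r addr0; apply: submx_trans hp' xeuQ.
Qed.

Lemma bwd (VP : 'M[R]_5) (Q : set (vec R)) S T :
  let P := [set x | inH4 x /\ (x <= VP)%MS] in
  \rank VP = 3%N -> is_plane Q -> is_hyperplane S -> P `<=` S -> hyp_orth T P ->
  bd Q = bd S `&` bd T -> orth_through_line Q P.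
Proof.
move=> P rP [VQ [rQ [eQ [xQ hxQ]]]] [VS [rS [eS _]]] PS [n [pn [eT [[y [Ty Py]] htang]]]] hb.
have nzn := nz_of_pos pn.
case: Py => hy yP.
have yn : mink y n = 0 by move: Ty; rewrite eT => -[].
have nP : (n <= VP)%MS by have [hs _] := htang y Ty (conj hy yP); apply: span_sub hs.
have VPS : forall z, (z <= VP)%MS -> (z <= VS)%MS.
  move=> z zP; apply: span_sub; rewrite -eS; apply: in_span_mono PS _.
  exact: spanH4 yP zP.
have yS := VPS _ yP.
have ryn : \rank (y + n)%MS = 2%N.
  by rewrite rank_add ?(rank1 hy) // (notin hy (submx_refl _) (orthsp1 yn)).
have [e [eP [nze [ye ne]]]] : exists e, (e <= VP)%MS /\ e != 0 /\ (mink y e = 0 /\ mink n e = 0).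
  apply: (gs (A := (y + n)%MS)) => //; [by rewrite addsmx_sub yP nP | by rewrite ryn rP |].
  move=> z; exists ((- mink z y) *: y + (mink z n / mink n n) *: n); split.
    by apply: lin_sub; [apply: subAddl; apply: submx_refl | apply: subAddr].
  exact: prj2.
have ey : mink e y = 0 by rewrite minkC.
have en : mink e n = 0 by rewrite minkC.
have ny : mink n y = 0 by rewrite minkC.
have ree := spacelike hy ye nze.
have rye : \rank (y + e)%MS = 2%N.
  by rewrite rank_add ?(rank1 hy) // (notin hy (submx_refl _) (orthsp1 ye)).
have oye_n : orthsp (y + e)%MS n by apply: orthspD; [apply: orthsp1|].
have ryen : \rank (y + e + n)%MS = 3%N by rewrite rank_add ?rye // (notin hy (subAddl _ (submx_refl _)) oye_n).
have [f [fS [nzf [yf [ef nf]]]]] : exists f, (f <= VS)%MS /\ f != 0 /\ (mink y f = 0 /\ mink e f = 0 /\ mink n f = 0).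
  apply: (gs (A := (y + e + n)%MS)) => //; [by rewrite !addsmx_sub yS (VPS _ eP) (VPS _ nP) | by rewrite ryen rS |].
  move=> z; exists ((- mink z y) *: y + (mink z e / mink e e) *: e + (mink z n / mink n n) *: n); split.
    apply: addmx_sub; last by apply: scalemx_sub; apply: subAddr.
    by apply: subAddl; apply: lin_sub; [apply: subAddl; apply: submx_refl | apply: subAddr].
  exact: prj3.
have fy : mink f y = 0 by rewrite minkC.
have fe : mink f e = 0 by rewrite minkC.
have fn : mink f n = 0 by rewrite minkC.
have ff := spacelike hy yf nzf.
have oyen_f : orthsp (y + e + n)%MS f by apply: orthspD; [apply: orthspD; [apply: orthsp1|]|].
have rall : \rank (y + e + n + f)%MS = 4%N by rewrite rank_add ?ryen // (notin hy (subAddl _ (subAddl _ (submx_refl _))) oyen_f).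
have SE : (VS <= y + e + n + f)%MS by apply: eq_by_rank; [rewrite !addsmx_sub yS fS (VPS _ eP) (VPS _ nP) | rewrite rall rS].
have PE : (VP <= y + e + n)%MS by apply: eq_by_rank; [rewrite !addsmx_sub yP eP nP | rewrite ryen rP].
have yefS : ((y + e + f)%MS <= VS)%MS by rewrite !addsmx_sub yS fS (VPS _ eP).
have oye_f : orthsp (y + e)%MS f by apply: orthspD; [apply: orthsp1|].
have C1 : forall p, ((p <= VS)%MS /\ mink p n = 0) <-> (p <= y + e + f)%MS.
  move=> p; split.
    case=> pS pn0; have := submx_trans pS SE.
    case/subAddP => p1 [d [hp1 ep]]; move: hp1; case/subAddP => p2 [c [hp2 ep1]].
    have c0 : c = 0.
      move: pn0; rewrite ep ep1 !minkDl !minkZl oye_n // fn mulr0 addr0 add0r => /eqP.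
      by rewrite mulf_eq0 (gt_eqF pn) orbF => /eqP.
    by rewrite ep ep1 c0 scale0r addr0; apply: subAdd.
  move=> pE; split; first exact: submx_trans pE yefS.
  move: pE; case/subAddP => p2 [d [hp2 ->]].
  by rewrite minkDl minkZl oye_n // fn mulr0 addr0.
have yT : T y by [].
have Tker : T = [set x | inH4 x /\ (x <= kermx (mJ n))%MS] by rewrite eT hyp_ker.
have ykr : (y <= kermx (mJ n))%MS by rewrite kerJ yn.
have xQV : (xQ <= VQ)%MS by move: hxQ; rewrite eQ => -[].
have hxQ' : inH4 xQ by move: hxQ; rewrite eQ => -[].
have bdE : forall p, ideal p -> ((p <= VQ)%MS <-> (p <= y + e + f)%MS).
  move=> p ip.
  have : bd Q p <-> (bd S `&` bd T) p by rewrite hb.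
  rewrite /bd /= eQ eS Tker => h.
  split.
    move=> pQ; have [[_ s1] [_ s2]] := (proj1 h) (conj ip (spanH4 hxQ' xQV pQ)).
    apply/C1; split; first exact: span_sub s1.
    by move: (span_sub s2); rewrite kerJ => /eqP.
  move/C1 => [pS pn0].
  have pk : (p <= kermx (mJ n))%MS by rewrite kerJ pn0.
  have [_ s] := (proj2 h) (conj (conj ip (spanH4 hy yS pS)) (conj ip (spanH4 hy ykr pk))).
  exact: span_sub s.
have [wq [wqQ [nzw xw]]] : exists w, (w <= VQ)%MS /\ w != 0 /\ mink xQ w = 0.
  apply: (gs (A := xQ)) => //; first by rewrite (rank1 hxQ') rQ.
  by move=> z; exists ((- mink z xQ) *: xQ); split; [apply: scalemx_sub | apply: prj1].
have y3 : (y <= y + e + f)%MS by apply: subAddl; apply: subAddl; apply: submx_refl.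
have e3 : (e <= y + e + f)%MS by apply: subAddl; apply: subAddr.
have QE1 : (VQ <= y + e + f)%MS.
  apply/rV_subP => z zQ; apply: (nullspan hxQ' xQV wqQ xw nzw) zQ.
  by move=> p ip; move/(bdE p ip).
have QE2 : (y + e + f <= VQ)%MS.
  apply/rV_subP => z zV; apply: (nullspan hy y3 e3 ye nze) zV.
  by move=> p ip; move/(bdE p ip).
have y2 : (y <= y + e)%MS by apply: subAddl; apply: submx_refl.
have e2 : (e <= y + e)%MS by apply: subAddr.
have yeP : ((y + e)%MS <= VP)%MS by rewrite addsmx_sub yP eP.
have QPE : Q `&` P = [set x | inH4 x /\ (x <= y + e)%MS].
  apply/seteqP; split => z.
    rewrite eQ => -[[hz zQ] [_ zP]]; split => //.
    have := submx_trans zQ QE1; case/subAddP => z2 [d [hz2 ez]].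
    have d0 : d = 0.
      have : mink z f = 0 by apply: oyen_f; apply: submx_trans zP PE.
      rewrite ez minkDl minkZl oye_f // add0r => /eqP; rewrite mulf_eq0 (gt_eqF ff) orbF => /eqP //.
    by rewrite ez d0 scale0r addr0.
  move=> [hz zye]; split; rewrite ?eQ; split => //.
    by apply: submx_trans QE2; apply: subAddl.
  exact: submx_trans zye yeP.
split. exists (y + e)%MS; split => //; split => //; exists y; rewrite QPE; split => //.
move=> x u v hx [su xu] [sv xv] hu hv.
move: (hx); rewrite QPE => -[hx' xye].
have uQ : (u <= VQ)%MS by apply: span_sub; rewrite -eQ.
have vP : (v <= VP)%MS by apply: span_sub.
have perp : forall z, (z <= y + e)%MS -> mink u z = 0.
  move=> z zye.
  set w := z + mink z x *: x.
  have hxw0 : mink x w = 0 by rewrite /w minkDr minkZr H4_self // minkC; ring.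
  have wye : (w <= y + e)%MS by rewrite /w -[z]scale1r; apply: lin_sub.
  have := hu w; rewrite /tang QPE => /(_ (conj (spanH4 hy y2 wye) hxw0)).
  by rewrite /w minkDr minkZr (minkC u x) xu mulr0 addr0.
have := submx_trans uQ QE1; case/subAddP => u2 [c [hu2 eu]].
have u20 : u2 = 0.
  apply/eqP; apply: contraTT hu2 => nz; apply: (notin hy y2) => //.
  move=> z zye; rewrite minkC.
  have : mink u z = 0 by apply: perp.
  by rewrite eu minkDl minkZl (minkC f z) oye_f // mulr0 addr0.
rewrite eu u20 add0r minkZl (minkC f v) oyen_f ?mulr0 //.
exact: submx_trans vP PE.
Qed.

End S.

Theorem theorem5p6 (R : realType) (rho : vec R -> vec R) (Q : set (vec R)) :
  type_I_elliptic rho -> is_plane Q ->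
  (orth_through_line Q (twisting_plane rho) <-> half_turn_bank rho (bd Q)).
Proof.
move=> [n1 [n2 [p1 [p2 [ne [[VP [rP [eP [xP hxP]]]] hr]]]]]] hQ.
have tE := twistE p1 p2 ne hr.
rewrite /half_turn_bank /permuted_pencil /invariant_pencil tE eP.
split.
  move=> ho; have [S [T [hS [PS [hT [hoT bdE]]]]]] := fwd rP hQ ho.
  exists (bd S), (bd T); split; first by exists S.
  by split; first by exists T.
move=> [s [t [[S [hS [PS ->]]] [[T [hT [hoT ->]]] bdE]]]].
exact: bwd rP hQ hS PS hoT bdE.
Qed.
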